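(* Let $m,n$ be positive integers with $m>n$ and $m\ge 3$, and let $q$ be an odd prime. Let $(X,y_1,y_2)$ be positive integers with $X>1$, $\gcd(X,q)=1$, $y_1>y_2$, satisfying \[ X^m-X^n=q^{y_1}-q^{y_2}. \] Put $E=e_q(X)$ (then $E$ divides $m-n$), $N=(m-n)/E$, $e=\nu_q(N)$, and assume that $N$ is odd and $y_2>e$. Define polynomials in $\mathbb Z[t]$: \[ A_E(t)=\begin{cases} t-1 & E=1,\\ t^{E-1}+t^{E-2}+\cdots+t+1 & E>1,\end{cases}\qquad B_{n,E}(t)=\begin{cases} t^n & E=1,\\ t^n(t-1) & E>1,\end{cases} \] \[ I_{E,N}(t)=t^{E(N-1)}+t^{E(N-2)}+\cdots+t^E+1. \] If $E>1$, assume at least one of: (I) $A_E(X)\ne q^{y_2-e}$; (II) $\dfrac{(y_2-e)(m-2E+2)+E-1}{m+\delta(E-1)}\ge \dfrac{\log 2}{\log q}$, where $\delta=1$ if $X^m>q^{y_1}$ and $\delta=0$ if $X^m<q^{y_1}$. Let $(P,Q)$ be the (unique) pair of polynomials in $\mathbb Q[t]$ with $\deg Q<\deg A_E$ such that \[ A_E(t)P(t)+B_{n,E}(t)\,I_{E,N}(t)\,Q(t)=1 \] in $\mathbb Q[t]$, and let $l$ be the least positive integer with $lP\in\mathbb Z[t]$ and $lQ\in\mathbb Z[t]$. Then \[ q^{y_2}\,l\,Q(X)+l\,A_E(X)\equiv 0 \pmod{q^{\kappa}}, \] where \[ \kappa=\begin{cases}\min\left\{2(y_2-e),\ \left\lceil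 \frac{m}{E-1}(y_2-e)\right\rceil\right\} & \text{if } E>1 \text{ and (I) holds},\\ 2(y_2-e) & \text{if } E=1, \text{ or } E>1 \text{ and (II) holds}.\end{cases} \]
   Context: For a positive integer $M$ and an integer $A$ coprime to $M$, $e_M(A)$ denotes the least positive integer $e$ such that $A^e\equiv 1$ or $A^e\equiv -1\pmod M$. For a prime $p$ and nonzero integer $A$, $\nu_p(A)$ is the exponent of $p$ in $A$. *)

(* Defs.v *)
From Stdlib Require Import ZArith Reals.
From mathcomp Require Import all_boot all_order all_algebra.
Set Implicit Arguments. Unset Strict Implicit. Unset Printing Implicit Defensive.
Import Order.TTheory GRing.Theory Num.Theory.

(* is_e_order M A E : E = e_M(A), the least positive integer E with
   A^E = 1 or A^E = -1 (mod M). *)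
Definition pm1_mod (M A k : nat) : bool :=
  (A ^ k == 1 %[mod M]) || (M %| A ^ k + 1).
Definition is_e_order (M A E : nat) : Prop :=
  0 < E /\ pm1_mod M A E /\ (forall k, 0 < k -> k < E -> ~~ pm1_mod M A k).

Local Open Scope ring_scope.

Definition polyA (R : nzRingType) (E : nat) : {poly R} :=
  if E == 1%N then 'X - 1 else \sum_(i < E) 'X^i.
Definition polyB (R : nzRingType) (n E : nat) : {poly R} :=
  if E == 1%N then 'X^n else 'X^n * ('X - 1).
Definition polyI (R : nzRingType) (E N : nat) : {poly R} :=
  \sum_(i < N) 'X^(E * i).

Definition int_poly (p : {poly rat}) : Prop :=
  forall i : nat, exists z : int, p`_i = z%:~R.

Local Close Scope ring_scope.
Definition condII (X q m y1 y2 e E : nat) : Prop :=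
  let delta : nat := if (q ^ y1 < X ^ m)%N then 1%N else 0%N in
  let num : Z := Z.sub (Z.add (Z.mul (Z.of_nat (y2 - e))
                     (Z.add (Z.sub (Z.of_nat m) (Z.mul 2 (Z.of_nat E))) 2))
                     (Z.of_nat E)) 1 in
  let den : nat := (m + delta * (E - 1))%N in
  Rge (Rdiv (IZR num) (INR den)) (Rdiv (ln (INR 2)) (ln (INR q))).

(* Main.v *)
Require Import Defs.
From Stdlib Require Import ZArith Reals.
From mathcomp Require Import all_boot all_order all_algebra.
From Stdlib Require Import Lra Lia.
From mathcomp Require Import zify.
Import Order.TTheory GRing.Theory Num.Theory.


Lemma pow_lin (q t i : nat) : exists r, (1 + q*t)^i = 1 + i*q*t + (q*q)*r.
Proof.
elim: i => [|i [r IH]]; first by exists 0; rewrite expn0; lia.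
exists (r + i*t*t + q*t*r); rewrite expnS IH; nia.
Qed.

Lemma sum_lin (q t i : nat) : exists r,
  2 * (\sum_(j < i) (1 + q*t)^j) + q*t*i = 2*i + q*t*(i*i) + 2*((q*q)*r).
Proof.
elim: i => [|i [r IH]]; first by exists 0; rewrite big_ord0; lia.
have [r' Hr'] := pow_lin q t i.
exists (r + r'); rewrite big_ord_recr /= Hr'.
move: IH; set S := \sum_(_ < _) _ => IH.
nia.
Qed.

Lemma sum_mod (Y q t N : nat) : Y = 1 + q*t -> exists r, \sum_(i < N) Y^i = N + q*r.
Proof.
move=> ->; elim: N => [|N [r IH]]; first by exists 0; rewrite big_ord0; lia.
have [r' Hr'] := pow_lin q t N.
exists (r + N*t + q*r'); rewrite big_ord_recr /= Hr' IH; nia.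
Qed.

Lemma geom_split (Y a b : nat) :
  \sum_(i < a*b) Y^i = (\sum_(i<a) Y^i) * \sum_(j<b) (Y^a)^j.
Proof.
elim: b => [|b IH]; first by rewrite muln0 !big_ord0 muln0.
rewrite mulnS big_split_ord /= big_ord_recl /= expn0 mulnDr muln1; congr (_ + _).
rewrite (eq_bigr (fun i : 'I_(a*b) => Y^a * Y^i)); last by move=> i _; rewrite expnD.
rewrite -big_distrr /= IH mulnCA; congr (_ * _).
rewrite big_distrr /=; apply: eq_bigr => i _; by rewrite expnS.
Qed.

Lemma logn_Sq (q t : nat) : prime q -> odd q ->
  logn q (\sum_(i < q) (1 + q*t)^i) = 1.
Proof.
move=> pq oq.
have [r Hr] := sum_lin q t q.
have [h Hh] : exists h, q = h.*2.+1.
  by exists q./2; rewrite -[LHS]odd_double_half oq.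
have -> : \sum_(i < q) (1 + q*t)^i = q * (1 + q*(t*h + r)).
  move: Hr; rewrite Hh -!muln2; nia.
rewrite (lognM _ (prime_gt0 pq)) ?addn_gt0 // (logn_prime _ pq) eqxx.
rewrite logn_coprime // prime_coprime // (dvdn_addl _ (dvdn_mulr _ (dvdnn q))) dvdn1.
by apply/eqP => q1; rewrite q1 in pq.
Qed.

Lemma LTE (q t N : nat) : prime q -> odd q -> 0 < N ->
  logn q (\sum_(i < N) (1 + q*t)^i) = logn q N.
Proof.
move=> pq oq; elim: N {-2}N (leqnn N) t => [|B IH] N NB t N0.
  by move: NB N0; rewrite leqn0 => /eqP ->.
have q1 := prime_gt1 pq.
case: (boolP (q %| N)) => qN.
  have [M NM] := dvdnP qN; rewrite NM in N0 NB *.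
  have M0 : 0 < M by move: N0; rewrite muln_gt0 => /andP[].
  rewrite mulnC geom_split.
  have P1 : 0 < \sum_(i<q) (1+q*t)^i.
    by rewrite (bigD1 (Ordinal (prime_gt0 pq))) //= expn0 add1n.
  have P2 : 0 < \sum_(i<M) ((1+q*t)^q)^i.
    by rewrite (bigD1 (Ordinal M0)) //= expn0 add1n.
  rewrite (lognM _ P1 P2) logn_Sq // (lognM _ (prime_gt0 pq) M0) (logn_prime _ pq) eqxx.
  have [r Hr] := pow_lin q t q.
  have -> : (1 + q*t)^q = 1 + q*(q*t + q*r) by rewrite Hr; nia.
  congr (_ + _); apply: IH => //.
  nia.
have [r Hr] := sum_mod (1+q*t) q t N (erefl _).
rewrite [RHS]logn_coprime ?prime_coprime //.
rewrite logn_coprime // prime_coprime // Hr.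
by rewrite (dvdn_addl _ (dvdn_mulr _ (dvdnn q))).
Qed.

Lemma nat_geom (Y N : nat) : 1 <= Y -> Y^N - 1 = (Y-1) * \sum_(i<N) Y^i.
Proof.
move=> Y1; elim: N => [|N IH]; first by rewrite big_ord0 expn0 muln0.
rewrite big_ord_recr /= mulnDr -IH expnS.
have : 1 <= Y^N by rewrite expn_gt0 (leq_trans _ Y1).
move: (Y^N) => Z Z1; nia.
Qed.

Local Open Scope ring_scope.
Lemma field_part (F : fieldType) (x : F) (d E : nat) :
  x ^+ d = 1 -> (0 < E)%N -> (x ^+ E = 1 \/ x ^+ E = -1) ->
  (forall k, (0 < k)%N -> (k < E)%N -> ~ (x ^+ k = 1 \/ x ^+ k = -1)) ->
  odd ((d %/ E)%N) -> (2%:R != 0 :> F) -> (E %| d)%N /\ x ^+ E = 1.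
Proof.
move=> xd E0 hE hmin ok two.
have dE := divn_eq d E.
have hr : x ^+ ((d %% E)%N) = 1 \/ x ^+ ((d %% E)%N) = -1.
  have : x ^+ ((d %/ E)%N * E + (d %% E)%N) = 1 by rewrite -dE.
  rewrite exprD mulnC exprM.
  case: hE => ->; first by rewrite expr1n mul1r => ->; left.
  rewrite -signr_odd ok expr1 mulN1r => /eqP; rewrite eqr_oppLR => /eqP; by right.
have r0 : (d %% E)%N = 0%N.
  apply/eqP; rewrite eqn0Ngt; apply/negP => r0.
  exact: (hmin _ r0 (ltn_pmod _ E0)).
have Ed : (E %| d)%N by rewrite /dvdn r0.
split => //; case: hE => // hm.
have : x ^+ ((d %/ E)%N * E + (d %% E)%N) = 1 by rewrite -dE.
rewrite r0 addn0 mulnC exprM hm -signr_odd ok expr1 => /eqP.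
move=> h; move: two; by rewrite mulr2n -{1}(eqP h) addNr eqxx.
Qed.

Local Close Scope ring_scope.
Lemma expn_pow (a b : nat) : a ^ b = Nat.pow a b.
Proof. elim: b => [|b IH]; first by rewrite expn0. by rewrite expnS IH. Qed.

Open Scope R_scope.
Lemma condII_nat (X q m y1 y2 e E : nat) : (1 < q)%N -> (0 < m)%N ->
  ~~ (q ^ y1 < X ^ m)%N -> condII X q m y1 y2 e E ->
  exists k : nat, (2 ^ m <= q ^ k)%N /\
   Z.of_nat k = Z.sub (Z.add (Z.mul (Z.of_nat (y2 - e))
                     (Z.add (Z.sub (Z.of_nat m) (Z.mul 2 (Z.of_nat E))) 2))
                     (Z.of_nat E)) 1.
Proof.
move=> q1 m0 hd; rewrite /condII (negbTE hd) mul0n addn0.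
set num := Z.sub _ 1 => H.
have mpos : 0 < INR m by apply: lt_0_INR; exact/ssrnat.ltP.
have qgt1 : (1 < INR q) by apply: lt_1_INR; exact/ssrnat.ltP.
have lq : (0 < ln (INR q)) by rewrite -ln_1; apply: ln_increasing; lra.
have l2 : (0 < ln (INR 2)) by rewrite -ln_1; apply: ln_increasing; simpl; lra.
have h1 : (ln (INR 2) * INR m <= IZR num * ln (INR q)).
  have := Rge_le _ _ H => H'.
  have := Rmult_le_compat_r (INR m * ln (INR q)) _ _ (Rlt_le _ _ (Rmult_lt_0_compat _ _ mpos lq)) H'.
  replace (ln (INR 2) / ln (INR q) * (INR m * ln (INR q))) with (ln (INR 2) * INR m) by (field; lra).
  replace (IZR num / INR m * (INR m * ln (INR q))) with (IZR num * ln (INR q)) by (field; lra).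
  done.
have npos : Z.lt 0 num.
  apply: lt_IZR; have : (0 < IZR num * ln (INR q)) by nra. nra.
exists (Z.to_nat num); split; last by rewrite Z2Nat.id //; lia.
rewrite !expn_pow; apply/ssrnat.leP; apply: INR_le; rewrite !pow_INR.
apply: Rnot_lt_le => hlt.
have := ln_increasing _ _ (pow_lt (INR q) (Z.to_nat num) ltac:(lra)) hlt.
rewrite !ln_pow; try lra.
rewrite INR_IZR_INZ Z2Nat.id; last lia.
lra. simpl; lra.
Qed.
Close Scope R_scope.

Lemma aux1 (X Pw An : nat) : 1 < X -> 0 < Pw -> X * Pw - 1 = (X - 1) * An -> An < 2 * Pw.
Proof.
move=> X1 P0 h; rewrite ltnNge; apply/negP => hA.
have : (X - 1) * (2 * Pw) <= (X - 1) * An by rewrite leq_mul2l hA orbT.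
nia.
Qed.

Lemma aux2 (qa An k : nat) : An = qa * k -> 0 < An -> An != qa -> 2 * qa <= An.
Proof.
move=> -> ; case: k => [|[|k]]; rewrite ?muln0 ?muln1 ?eqxx // => _ _.
by rewrite mulnC leq_mul2l; apply/orP; right.
Qed.

Lemma aux3 (m a E y1 : nat) : 1 < E -> a * m < y1 * (E - 1) ->
  (m * a + (E - 2)) %/ (E - 1) <= y1.
Proof.
move=> E1 h; rewrite -ltnS ltn_divLR; last by rewrite subn_gt0.
nia.
Qed.

Lemma aux4 (k a m E : nat) : 0 < a -> 1 < E ->
  Z.of_nat k = Z.sub (Z.add (Z.mul (Z.of_nat a)
                     (Z.add (Z.sub (Z.of_nat m) (Z.mul 2 (Z.of_nat E))) 2))
                     (Z.of_nat E)) 1 ->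
  k + (2 * a - 1) * (E - 1) = a * m.
Proof. move=> a0 E1 h. nia. Qed.

Lemma aux5 (y1 b : nat) : y1 < b -> y1 <= b - 1.
Proof. lia. Qed.

From mathcomp Require Import ring.
Local Open Scope ring_scope.

Lemma int_eval (p : {poly rat}) (X : nat) : int_poly p ->
  exists z : int, p.[X%:R] = z%:~R.
Proof.
move=> H; apply/intrP; rewrite horner_coef; apply: rpred_sum => i _.
apply: rpredM; last by apply: rpredX; exact: natr_int.
have [z ->] := H i; exact: intr_int.
Qed.

Lemma final_comb (q a k y1 c : nat) (zp zq : int) :
  (c <= 2 * a)%N -> (c <= y1)%N -> exists z : int,
  ((q ^ a * k)%:R) ^+ 2 * zp%:~R + (q ^ y1)%:R * zq%:~R = z%:~R * (q ^ c)%:R :> rat.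
Proof.
move=> h1 h2.
exists ((q ^ (2 * a - c) * k ^ 2)%:Z * zp + (q ^ (y1 - c))%:Z * zq).
have e1 : (q ^ y1)%:R = (q ^ (y1 - c))%:R * (q ^ c)%:R :> rat.
  by rewrite -natrM -expnD subnK.
have e2 : ((q ^ a * k)%:R) ^+ 2 = (q ^ (2 * a - c) * k ^ 2)%:R * (q ^ c)%:R :> rat.
  rewrite -natrX -natrM; congr (_%:R).
  by rewrite expnMn -expnM mulnAC -expnD subnK // (mulnC a).
rewrite e1 e2 intrD !intrM -!pmulrn; ring.
Qed.

Theorem mainTheorem4 (m n q X y1 y2 E : nat) (P Q : {poly rat}) (l : nat) :
  (0 < n)%N -> (n < m)%N -> (3 <= m)%N ->
  prime q -> odd q ->
  (1 < X)%N -> coprime X q -> (0 < y2)%N -> (y2 < y1)%N ->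
  (X%:Z ^+ m - X%:Z ^+ n = q%:Z ^+ y1 - q%:Z ^+ y2) ->
  is_e_order q X E ->
  let N := ((m - n) %/ E)%N in
  let e := logn q N in
  odd N -> (e < y2)%N ->
  ((1 < E)%N ->
     (polyA rat E).[X%:R] != (q ^ (y2 - e))%:R \/ condII X q m y1 y2 e E) ->
  (size Q < size (polyA rat E))%N ->
  polyA rat E * P + polyB rat n E * polyI rat E N * Q = 1 ->
  (0 < l)%N -> int_poly (l%:R *: P) -> int_poly (l%:R *: Q) ->
  (forall l' : nat, (0 < l')%N -> int_poly (l'%:R *: P) ->
      int_poly (l'%:R *: Q) -> (l <= l')%N) ->
  let v : rat := (q ^ y2 * l)%:R * Q.[X%:R] + l%:R * (polyA rat E).[X%:R] in
  ((1 < E)%N -> (polyA rat E).[X%:R] != (q ^ (y2 - e))%:R ->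
     exists z : int, v = z%:~R *
       (q ^ minn (2 * (y2 - e)) ((m * (y2 - e) + (E - 2)) %/ (E - 1)))%:R)
  /\
  (E = 1%N \/ ((1 < E)%N /\ condII X q m y1 y2 e E) ->
     exists z : int, v = z%:~R * (q ^ (2 * (y2 - e)))%:R).
Proof.
move=> n0 nm m3 pq oq X1 cXq y20 y21 Heq [E0 [HE Hmin]] N e oN ey2 Hcond sQ HPQ
  l0 intP intQ lmin v.
have q1 := prime_gt1 pq.
have q0 := prime_gt0 pq.
set d := (m - n)%N.
have md : m = (n + d)%N by rewrite subnKC // ltnW.
have d0 : (0 < d)%N by rewrite subn_gt0.
have Heqn : (X ^ m + q ^ y2 = q ^ y1 + X ^ n)%N.
  have h : (X ^ m + q ^ y2)%N%:Z = (q ^ y1 + X ^ n)%N%:Z.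
    rewrite !PoszD -!natz !natrX !natz.
    by rewrite -[X%:Z ^+ m](subrK (X%:Z ^+ n)) Heq; ring.
  by case: h.
set xf : 'F_q := X%:R.
have chq := pchar_Fp pq.
have qF : (q%:R : 'F_q) = 0 by apply/eqP; rewrite -(dvdn_pcharf chq).
have xf0 : xf != 0.
  by rewrite /xf -(dvdn_pcharf chq) -prime_coprime // coprime_sym.
have modF : forall a b, (a == b %[mod q])%N = ((a%:R : 'F_q) == b%:R).
  by move=> a b; rewrite -(@val_Fp_nat q pq a) -(@val_Fp_nat q pq b).
have pm1F : forall k, pm1_mod q X k <-> (xf ^+ k = 1 \/ xf ^+ k = -1).
  move=> k; rewrite /pm1_mod modF (dvdn_pcharf chq) natrD natrX -/xf mulr1n addr_eq0.
  split => [/orP [/eqP -> | /eqP ->] | [->|->]]; [by left|by right|by rewrite eqxx|].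
  by rewrite eqxx orbT.
have xd : xf ^+ d = 1.
  have : ((X ^ m + q ^ y2)%N%:R : 'F_q) = (q ^ y1 + X ^ n)%N%:R by rewrite Heqn.
  rewrite !natrD !natrX qF !expr0n (gtn_eqF y20) (gtn_eqF (ltn_trans y20 y21)).
  rewrite addr0 add0r -/xf md exprD => h.
  by apply: (mulfI (expf_neq0 n xf0)); rewrite mulr1.
have two : (2%:R : 'F_q) != 0.
  rewrite -(dvdn_pcharf chq); apply/negP => /(dvdn_leq (ltn0Sn 1)) hq2.
  have q2 : q = 2%N by apply/eqP; rewrite eqn_leq hq2 q1.
  by rewrite q2 in oq.
have [Ed XE1] : (E %| d)%N /\ xf ^+ E = 1.
  apply: field_part => //; first exact/pm1F.
  by move=> k k0 kE /pm1F; apply/negP; exact: Hmin.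
have dNE : d = (N * E)%N by rewrite divnK.
have N0 : (0 < N)%N by rewrite /N divn_gt0 // dvdn_leq.
set Y := (X ^ E)%N.
have Y1 : (1 < Y)%N by rewrite /Y -{1}(expn0 X) ltn_exp2l.
have [t Yt] : exists t, Y = (1 + q * t)%N.
  exists (Y %/ q)%N.
  have : (Y == 1 %[mod q])%N by rewrite modF natrX -/xf XE1.
  rewrite (modn_small q1) => /eqP h.
  by rewrite {1}(divn_eq Y q) h addnC mulnC.
set S := (\sum_(i < N) Y ^ i)%N.
have Se : logn q S = e by rewrite /S Yt LTE.
have S0 : (0 < S)%N by rewrite /S (bigD1 (Ordinal N0)) //= expn0 add1n.
have XdYS : (X ^ d - 1 = (Y - 1) * S)%N by rewrite dNE mulnC expnM nat_geom // ltnW.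
have Hfac : (X ^ n * (X ^ d - 1) = q ^ y1 - q ^ y2)%N.
  have e1 : (X ^ m = X ^ n * X ^ d)%N by rewrite md expnD.
  have e2 : (q ^ y1 = q ^ y2 * q ^ (y1 - y2))%N by rewrite -expnD subnKC // ltnW.
  have : (1 <= X ^ d)%N by rewrite expn_gt0 ltnW.
  have := Heqn; rewrite e1 e2.
  move: (X ^ n)%N (X ^ d)%N (q ^ y2)%N (q ^ (y1 - y2))%N => a1 b1 c1 f1; nia.
have cqX : coprime q X by rewrite coprime_sym.
have qdiv : (q ^ y2 %| (Y - 1) * S)%N.
  rewrite -XdYS -(Gauss_dvdr _ (coprimeXl y2 (coprimeXr n cqX))) Hfac.
  by apply: dvdn_sub; [exact: dvdn_exp2l (ltnW y21) | exact: dvdnn].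
set a := (y2 - e)%N.
have Y10 : (0 < Y - 1)%N by rewrite subn_gt0.
have qa : (q ^ a %| Y - 1)%N.
  rewrite pfactor_dvdn //.
  move: qdiv; rewrite pfactor_dvdn ?muln_gt0 ?Y10 // lognM // Se /a.
  by rewrite leq_subLR addnC.
set c := if E == 1%N then 1%N else (X - 1)%N.
set Anat := if E == 1%N then (X - 1)%N else (\sum_(i < E) X ^ i)%N.
have YA : (Y - 1 = c * Anat)%N.
  rewrite /Anat /c /Y; case: eqP => [->|_]; first by rewrite expn1 mul1n.
  exact: nat_geom (ltnW X1).
have c0 : (0 < c)%N by rewrite /c; case: eqP => _ //; rewrite subn_gt0.
have qA : (q ^ a %| Anat)%N.
  move: qa; rewrite YA /c; case: eqP => [_|E1]; first by rewrite mul1n.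
  have E1' : (1 < E)%N by case: (E) E0 E1 => [|[|E']] //.
  rewrite Gauss_dvdr // coprimeXl // prime_coprime //; apply/negP => hx.
  have h1 : xf ^+ 1 = 1.
    move: hx; rewrite (dvdn_pcharf chq) natrB; last exact: ltnW.
    rewrite subr_eq0 => /eqP.
    by rewrite expr1.
  by move/negP: (Hmin 1%N isT E1'); apply; apply/pm1F; left.
have A0 : (0 < Anat)%N.
  rewrite /Anat; case: eqP => _; first by rewrite subn_gt0.
  by rewrite (bigD1 (Ordinal E0)) //= expn0 add1n.
have [k Ak] : exists k, Anat = (q ^ a * k)%N.
  by case/dvdnP: qA => k ->; exists k; rewrite mulnC.
have Aqa : (q ^ a <= Anat)%N by apply: dvdn_leq.
set x : rat := X%:R.
have hA : (polyA rat E).[x] = Anat%:R.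
  rewrite /polyA /Anat; case: eqP => _.
    by rewrite !hornerE natrB //; exact: ltnW.
  rewrite horner_sum natr_sum; apply: eq_bigr => i _.
  by rewrite hornerXn natrX.
have hI : (polyI rat E N).[x] = S%:R.
  rewrite /polyI horner_sum /S natr_sum; apply: eq_bigr => i _.
  by rewrite hornerXn exprM -!natrX.
have hB : (polyB rat n E).[x] = (X ^ n * c)%N%:R.
  rewrite /polyB /c; case: eqP => _.
    by rewrite hornerXn muln1 natrX.
  rewrite hornerM hornerXn !hornerE natrM natrX natrB //; exact: ltnW.
have hBIA : (polyB rat n E).[x] * (polyI rat E N).[x] * (polyA rat E).[x]
    = (q ^ y1)%N%:R - (q ^ y2)%N%:R.
  rewrite hB hI hA -!natrM -natrB; last by rewrite leq_exp2l // ltnW.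
  by rewrite -Hfac XdYS YA mulnAC !mulnA.
have hP : (polyA rat E).[x] * P.[x]
    + (polyB rat n E).[x] * (polyI rat E N).[x] * Q.[x] = 1.
  by have := congr1 (horner^~ x) HPQ; rewrite !hornerE.
have [zp hzp] := int_eval _ X intP.
have [zq hzq] := int_eval _ X intQ.
rewrite hornerZ -/x in hzp; rewrite hornerZ -/x in hzq.
have hv : v = ((q ^ a * k)%N%:R) ^+ 2 * zp%:~R + (q ^ y1)%N%:R * zq%:~R.
  rewrite /v -/x -hzp -hzq -Ak -hA.
  move: hP hBIA.
  move: ((polyA rat E).[x]) ((polyB rat n E).[x] * (polyI rat E N).[x]) (P.[x]) (Q.[x]) => Aa BI Pp Qq hP hBIA.
  have hq2 : (q ^ y2)%N%:R = (q ^ y1)%N%:R - BI * Aa :> rat by rewrite hBIA; ring.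
  rewrite natrM hq2.
  have -> : l%:R * Aa = l%:R * Aa * (Aa * Pp + BI * Qq) by rewrite hP mulr1.
  ring.
have Adx : (Anat <= X ^ d - 1)%N.
  by rewrite XdYS YA mulnAC; apply: leq_pmull; rewrite muln_gt0 c0 S0.
have qay2 : (q ^ a <= q ^ y2)%N by rewrite leq_exp2l // leq_subr.
have a0 : (0 < a)%N by rewrite subn_gt0.
have delta1 : (q ^ y1 < X ^ m)%N -> (2 * a < y1)%N.
  move=> hqX.
  have hn : (q ^ y2 < X ^ n)%N.
    by rewrite -(ltn_add2l (q ^ y1)) -Heqn ltn_add2r.
  rewrite -(ltn_exp2l _ _ q1) mul2n -addnn expnD.
  apply: (leq_ltn_trans (leq_mul qay2 (leq_trans Aqa Adx))).
  apply: (leq_trans _ (leq_subr (q ^ y2) (q ^ y1))).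
  by rewrite -Hfac ltn_pmul2r // (leq_trans A0 Adx).
have Aub : (1 < E)%N -> (Anat < 2 * X ^ (E - 1))%N.
  move=> E1.
  have hc : c = (X - 1)%N by rewrite /c (gtn_eqF E1).
  have hY : (Y = X * X ^ (E - 1))%N by rewrite /Y -expnS subn1 prednK.
  apply: (aux1 _ _ _ X1); first by rewrite expn_gt0 ltnW.
  by rewrite -hY YA hc.
have m0 : (0 < m)%N by apply: leq_trans m3.
split.
  move=> E1 hI'.
  rewrite -/x hA -/a eqr_nat in hI'.
  have h2 := aux2 _ _ _ Ak A0 hI'.
  have hqa : (q ^ a < X ^ (E - 1))%N.
    by rewrite -(ltn_pmul2l (isT : (0 < 2)%N)) (leq_ltn_trans h2 (Aub E1)).
  have hy1 : (minn (2 * a) ((m * a + (E - 2)) %/ (E - 1)) <= y1)%N.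
    case: (ltnP (q ^ y1) (X ^ m)) => hqX.
      exact: leq_trans (geq_minl _ _) (ltnW (delta1 hqX)).
    apply: leq_trans (geq_minr _ _) _; apply: aux3 => //.
    rewrite -(ltn_exp2l _ _ q1) !expnM.
    apply: (leq_trans (_ : _ < (X ^ (E - 1)) ^ m)%N); first by rewrite ltn_exp2r.
    by rewrite -expnM mulnC expnM leq_exp2r // subn_gt0.
  by rewrite hv; apply: final_comb => //; exact: geq_minl.
move=> hc.
suff h2a : (2 * a <= y1)%N by rewrite hv; apply: final_comb.
case: (ltnP (q ^ y1) (X ^ m)) => hqX; first exact: ltnW (delta1 hqX).
case: hc => [E1 | [E1 cII]].
  have hA1 : Anat = (X - 1)%N by rewrite /Anat E1.
  have hqa : (q ^ a < X)%N.
    by rewrite hA1 in Aqa; apply: (leq_ltn_trans Aqa); rewrite subn1 ltn_predL ltnW.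
  rewrite -(leq_exp2l _ _ q1) mulnC expnM.
  apply: (leq_trans _ hqX); apply: (leq_trans (ltnW (_ : _ < X ^ 2)%N)).
    by rewrite ltn_exp2r.
  by rewrite leq_pexp2l // ltnW.
have [k' [hk' hZ]] := condII_nat X q m y1 y2 e E q1 m0 ltac:(by rewrite -leqNgt) cII.
have hnat := aux4 _ _ _ _ a0 E1 hZ.
have hlt : (q ^ (a * m) < 2 ^ m * q ^ (y1 * (E - 1)))%N.
  rewrite expnM.
  apply: (leq_trans (_ : _ < (2 * X ^ (E - 1)) ^ m)%N).
    by rewrite ltn_exp2r // (leq_ltn_trans Aqa (Aub E1)).
  have E10 : (0 < E - 1)%N by rewrite subn_gt0.
  rewrite expnMn leq_mul2l; apply/orP; right.
  by rewrite -expnM mulnC !expnM leq_exp2r.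
rewrite leqNgt; apply/negP => hy.
have : (2 ^ m * q ^ (y1 * (E - 1)) <= q ^ (a * m))%N.
  rewrite -hnat expnD; apply: leq_mul => //.
  by rewrite leq_exp2l // leq_mul2r (aux5 _ _ hy) orbT.
by rewrite leqNgt hlt.
Qed.
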